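(* The sequence $(M_n)_{n\ge2}$ defined by $$M_n=\frac{2}{n-1}Z_n-4\bigl(\Psi(n)+\gamma\bigr)$$ is a martingale with respect to the filtration $(\mathbb{F}_n)_{n\ge2}$, where $\Psi$ is the digamma function and $\gamma$ Euler's constant.
   Context: Consider the random sequence of trees $(T_n)_{n\ge1}$ with node labels $1,\dots,n$ defined as follows: $T_1$ is a single node labeled $1$; $T_2$ consists of nodes $1,2$ joined by an edge; for $n\ge3$, $T_n$ is obtained from $T_{n-1}$ by adding a node labeled $n$ and an edge joining it to a node $i\in\{1,\dots,n-1\}$ chosen, conditionally on $T_1,\dots,T_{n-1}$, with probability $D_{n-1,i}/(2(n-2))$, where $D_{m,i}$ is the degree of node $i$ in $T_m$. The Zagreb index of $T_n$ is $Z_n=\sum_{j=1}^n D_{n,j}^2$. $\mathbb{F}_n$ is the $\sigma$-field generated by $T_1,\dots,T_n$. *)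

(* Defs.v *)
From Stdlib Require Import Reals List Arith Lra.
Import ListNotations.
Open Scope R_scope.

(* A tree history T_1,...,T_n (n >= 1) is encoded by the list
   p = [a_2; a_3; ...; a_n] where a_k is the label of the node to which
   node k was attached when it was added.  So T_n has n = S (length p) nodes
   labelled 1..n and edges {k, a_k}, 2 <= k <= n.  The prefix firstn (k-1) p
   encodes T_k, so p encodes the whole history (T_1,...,T_n), i.e. an atom of
   the sigma-field F_n. *)

Definition nnodes (p : list nat) : nat := S (length p).

Definition deg (p : list nat) (i : nat) : nat :=
  count_occ Nat.eq_dec p i
  + (if andb (Nat.leb 2 i) (Nat.leb i (nnodes p)) then 1 else 0)%nat.

Definition rsum (f : nat -> R) (a len : nat) : R :=
  fold_right Rplus 0 (map f (seq a len)).

Definition zagreb (p : list nat) : R :=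
  rsum (fun j => INR (deg p j) ^ 2) 1 (nnodes p).

(* Transition probability: given the history p (T_m with m = nnodes p >= 2),
   node m+1 is attached to node i with probability D_{m,i} / (2 (m-1)). *)
Definition trans (p : list nat) (i : nat) : R :=
  if andb (Nat.leb 1 i) (Nat.leb i (nnodes p))
  then INR (deg p i) / (2 * INR (length p))
  else 0.

(* Probability of the history p (for nnodes p >= 2): node 2 is attached to
   node 1 with probability 1, then the transitions above. *)
Definition histprob (p : list nat) : R :=
  match p with
  | [] => 1
  | a :: _ =>
      (if Nat.eqb a 1 then 1 else 0) *
      fold_right Rmult 1
        (map (fun k => trans (firstn k p) (nth k p O)) (seq 1 (length p - 1)))
  end.

Definition is_euler_gamma (g : R) : Prop :=
  Un_cv (fun n => sum_f_R0 (fun k => / INR (S k)) n - ln (INR (S n))) g.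

Definition is_digamma (g : R) (psi : R -> R) : Prop :=
  forall x, 0 < x ->
    infinite_sum (fun k => / INR (S k) - / (INR k + x)) (psi x + g).

Definition Mseq (g : R) (psi : R -> R) (p : list nat) : R :=
  2 / INR (nnodes p - 1) * zagreb p - 4 * (psi (INR (nnodes p)) + g).

(* Main.v *)
Require Import Defs.
From Stdlib Require Import Reals List Arith Lra Lia.
Import ListNotations.
Open Scope R_scope.

Lemma rsum_S f a len : rsum f a (S len) = f a + rsum f (S a) len.
Proof. reflexivity. Qed.
Lemma rsum_0 f a : rsum f a 0 = 0.
Proof. reflexivity. Qed.

Lemma rsum_Sr f a len : rsum f a (S len) = rsum f a len + f (a+len)%nat.
Proof.
  revert a; induction len; intro a.
  - rewrite rsum_S, !rsum_0, Nat.add_0_r; ring.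
  - rewrite rsum_S, IHlen, (rsum_S f a len). replace (S a + len)%nat with (a + S len)%nat by lia. ring.
Qed.

Lemma rsum_ext f h a len :
  (forall j, (a <= j < a + len)%nat -> f j = h j) -> rsum f a len = rsum h a len.
Proof.
  revert a; induction len; intros a H; [reflexivity|].
  rewrite !rsum_S, (H a) by lia. rewrite (IHlen (S a)); [reflexivity|].
  intros j Hj; apply H; lia.
Qed.

Lemma rsum_lin c d f h a len :
  rsum (fun j => c * f j + d * h j) a len = c * rsum f a len + d * rsum h a len.
Proof.
  revert a; induction len; intro a.
  - rewrite !rsum_0; ring.
  - rewrite !rsum_S, IHlen; ring.
Qed.

Lemma rsum_plus f h a len :
  rsum (fun j => f j + h j) a len = rsum f a len + rsum h a len.
Proof.
  rewrite <- (Rmult_1_l (rsum f a len)), <- (Rmult_1_l (rsum h a len)), <- rsum_lin.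
  apply rsum_ext; intros; ring.
Qed.

Lemma rsum_const c a len : rsum (fun _ => c) a len = INR len * c.
Proof.
  revert a; induction len; intro a.
  - rewrite rsum_0; simpl; ring.
  - rewrite rsum_S, IHlen, S_INR; ring.
Qed.

Lemma rsum_ind i c a len :
  rsum (fun j => if Nat.eqb j i then c else 0) a len
  = if andb (Nat.leb a i) (Nat.ltb i (a + len)) then c else 0.
Proof.
  revert a; induction len; intro a.
  - rewrite rsum_0. destruct (Nat.leb_spec a i), (Nat.ltb_spec i (a+0)); simpl; try lia; reflexivity.
  - rewrite rsum_S, IHlen.
    destruct (Nat.eqb_spec a i), (Nat.leb_spec a i), (Nat.ltb_spec i (a + S len)),
      (Nat.leb_spec (S a) i), (Nat.ltb_spec i (S a + len)); simpl; try lia; ring.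
Qed.

Lemma rsum_count (p : list nat) M :
  (forall x, In x p -> (1 <= x <= M)%nat) ->
  rsum (fun j => INR (count_occ Nat.eq_dec p j)) 1 M = INR (length p).
Proof.
  induction p as [|a p IH]; intro H.
  - simpl. rewrite rsum_const; ring.
  - rewrite (rsum_ext _ (fun j => INR (count_occ Nat.eq_dec p j) + (if Nat.eqb j a then 1 else 0))).
    + rewrite rsum_plus, IH, rsum_ind by (intros; apply H; simpl; auto).
      destruct (H a (or_introl eq_refl)).
      destruct (Nat.leb_spec 1 a), (Nat.ltb_spec a (1 + M)); try lia.
      change (length (a :: p)) with (S (length p)). simpl andb. rewrite S_INR; ring.
    + intros j _. simpl. destruct (Nat.eq_dec a j), (Nat.eqb_spec j a); try lia.
      rewrite S_INR; ring. ring.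
Qed.

Lemma rsum_deg (p : list nat) :
  (forall x, In x p -> (1 <= x <= nnodes p)%nat) ->
  rsum (fun j => INR (deg p j)) 1 (nnodes p) = 2 * INR (length p).
Proof.
  intro H.
  rewrite (rsum_ext _ (fun j => INR (count_occ Nat.eq_dec p j) + (1 * 1 + (-1) * (if Nat.eqb j 1 then 1 else 0)))).
  - rewrite rsum_plus, rsum_count by exact H. rewrite rsum_lin, rsum_const, rsum_ind.
    unfold nnodes. simpl (andb _ _). rewrite S_INR. replace (1 <? S (S (length p)))%nat with true by (symmetry; apply Nat.ltb_lt; lia). ring.
  - intros j Hj. unfold deg. rewrite plus_INR.
    destruct (Nat.leb_spec 2 j), (Nat.leb_spec j (nnodes p)), (Nat.eqb_spec j 1); simpl; try lia; ring.
Qed.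

Lemma prod_nz {A} (f : A -> R) l :
  fold_right Rmult 1 (map f l) <> 0 -> forall x, In x l -> f x <> 0.
Proof.
  induction l as [|a l IH]; simpl; intros H x Hx; [contradiction|].
  destruct Hx as [<-|Hx].
  - intro E; apply H; rewrite E; ring.
  - apply IH; auto. intro E; apply H; rewrite E; ring.
Qed.

Lemma valid_of_hist p : (1 <= length p)%nat -> 0 < histprob p ->
  forall x, In x p -> (1 <= x <= nnodes p)%nat.
Proof.
  intros Hl Hp x Hx.
  destruct (In_nth p x O Hx) as [k [Hk <-]].
  destruct p as [|a q]; [simpl in Hl; lia|].
  simpl in Hp. destruct (Nat.eqb_spec a 1).
  2:{ lra. }
  destruct k as [|k].
  - simpl. unfold nnodes; simpl; lia.
  - assert (Hnz : fold_right Rmult 1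
      (map (fun k => trans (firstn k (a :: q)) (nth k (a :: q) O)) (seq 1 (length q - 0))) <> 0) by (simpl; lra).
    assert (Hin : In (S k) (seq 1 (length q - 0))) by (apply in_seq; simpl in Hk; lia).
    pose proof (prod_nz _ _ Hnz _ Hin) as Ht.
    unfold trans in Ht.
    destruct (Nat.leb_spec 1 (nth (S k) (a :: q) O)), (Nat.leb_spec (nth (S k) (a :: q) O) (nnodes (firstn (S k) (a :: q)))); simpl andb in Ht; try (exfalso; apply Ht; reflexivity).
    unfold nnodes in *. rewrite length_firstn in *. simpl length in *. lia.
Qed.

Lemma psi_step g psi x : is_digamma g psi -> 0 < x -> psi (x + 1) = psi x + / x.
Proof.
  intros Hd Hx.
  pose proof (Hd x Hx) as H1. pose proof (Hd (x+1) ltac:(lra)) as H2.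
  assert (Hc : Un_cv (fun m => sum_f_R0 (fun k => / INR (S k) - / (INR k + x)) m
                           - sum_f_R0 (fun k => / INR (S k) - / (INR k + (x+1))) m)
               ((psi x + g) - (psi (x+1) + g))) by (apply CV_minus; assumption).
  assert (Htel : forall m, sum_f_R0 (fun k => / INR (S k) - / (INR k + x)) m
                           - sum_f_R0 (fun k => / INR (S k) - / (INR k + (x+1))) m
                  = / (INR m + x + 1) - / x).
  { intro m. induction m.
    - simpl. field. lra.
    - rewrite !tech5.
      set (A := sum_f_R0 (fun k => / INR (S k) - / (INR k + x)) m) in *.
      set (B := sum_f_R0 (fun k => / INR (S k) - / (INR k + (x+1))) m) in *.
      replace (A + (/ INR (S (S m)) - / (INR (S m) + x)) -
                (B + (/ INR (S (S m)) - / (INR (S m) + (x + 1)))))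
        with ((A - B) + (/ (INR (S m) + (x + 1)) - / (INR (S m) + x))) by ring.
      rewrite IHm. rewrite S_INR.
      pose proof (pos_INR m). field. lra. }
  assert (Hc2 : Un_cv (fun m => / (INR m + x + 1) - / x) (- / x)).
  { intros eps He.
    destruct (archimed (/ eps)) as [Ha _].
    destruct (INR_IZR_INZ (Z.to_nat (up (/ eps)))) as [].
    exists (Z.to_nat (up (/ eps))). intros n Hn.
    unfold Rdist. replace (/ (INR n + x + 1) - / x - - / x) with (/ (INR n + x + 1)) by ring.
    apply le_INR in Hn.
    assert (Hup : IZR (up (/ eps)) <= INR (Z.to_nat (up (/ eps)))).
    { rewrite INR_IZR_INZ. apply IZR_le. lia. }
    assert (Hpos : 0 < INR n + x + 1) by (pose proof (pos_INR n); lra).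
    rewrite Rabs_right by (left; apply Rinv_0_lt_compat; lra).
    assert (/ eps < INR n + x + 1) by lra.
    apply Rinv_lt_contravar in H; [|apply Rmult_lt_0_compat; [apply Rinv_0_lt_compat|]; lra].
    rewrite Rinv_inv in H. exact H. }
  assert (Hc1 : Un_cv (fun m => / (INR m + x + 1) - / x) ((psi x + g) - (psi (x+1) + g))).
  { intros eps He. destruct (Hc eps He) as [N HN]. exists N. intros n Hn.
    rewrite <- Htel. apply HN; auto. }
  pose proof (UL_sequence _ _ _ Hc1 Hc2). lra.
Qed.

Lemma zagreb_app p i :
  (forall x, In x p -> (1 <= x <= nnodes p)%nat) -> (1 <= i <= nnodes p)%nat ->
  zagreb (p ++ [i]) = zagreb p + 2 * INR (deg p i) + 2.
Proof.
  intros Hv Hi.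
  unfold zagreb.
  replace (nnodes (p ++ [i])) with (S (nnodes p))
    by (unfold nnodes; rewrite length_app; simpl; lia).
  rewrite rsum_Sr.
  assert (Hlast : deg (p ++ [i]) (1 + nnodes p)%nat = 1%nat).
  { unfold deg. rewrite count_occ_app.
    assert (count_occ Nat.eq_dec p (1 + nnodes p)%nat = 0%nat).
    { apply count_occ_not_In. intro H; apply Hv in H; lia. }
    rewrite H. simpl count_occ. destruct (Nat.eq_dec i (S (nnodes p))); [lia|].
    replace (nnodes (p ++ [i])) with (S (nnodes p))
      by (unfold nnodes; rewrite length_app; simpl; lia).
    destruct (Nat.leb_spec 2 (1 + nnodes p)), (Nat.leb_spec (1 + nnodes p) (S (nnodes p))); simpl; try lia.
    }
  rewrite Hlast.
  rewrite (rsum_ext _ (fun j => INR (deg p j) ^ 2 + (if Nat.eqb j i then 2 * INR (deg p i) + 1 else 0))).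
  - rewrite rsum_plus, rsum_ind.
    destruct (Nat.leb_spec 1 i), (Nat.ltb_spec i (1 + nnodes p)); simpl; try lia. ring.
  - intros j Hj.
    assert (E : deg (p ++ [i]) j = (deg p j + if Nat.eqb j i then 1 else 0)%nat).
    { unfold deg. rewrite count_occ_app.
      replace (nnodes (p ++ [i])) with (S (nnodes p))
        by (unfold nnodes; rewrite length_app; simpl; lia).
      simpl count_occ.
      destruct (Nat.eq_dec i j), (Nat.eqb_spec j i), (Nat.leb_spec 2 j),
        (Nat.leb_spec j (S (nnodes p))), (Nat.leb_spec j (nnodes p)); simpl; lia. }
    rewrite E, plus_INR. destruct (Nat.eqb_spec j i); [subst|]; simpl; ring.
Qed.

Theorem lemma4p2 (g : R) (psi : R -> R) :
  is_euler_gamma g -> is_digamma g psi ->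
  forall p : list nat, (1 <= length p)%nat -> 0 < histprob p ->
    rsum (fun i => trans p i * Mseq g psi (p ++ [i])) 1 (nnodes p)
    = Mseq g psi p.
Proof.
  intros _ Hd p Hl Hp.
  pose proof (valid_of_hist p Hl Hp) as Hv.
  set (n := length p) in *.
  assert (Hn : 1 <= INR n) by (apply (le_INR 1); lia).
  set (Z := zagreb p).
  set (c := psi (INR (S (S n))) + g).
  set (al := (2 / (INR n + 1) * (Z + 2) - 4 * c) / (2 * INR n)).
  set (be := 2 / (INR n * (INR n + 1))).
  rewrite (rsum_ext _ (fun i => al * INR (deg p i) + be * (INR (deg p i) ^ 2))).
  - rewrite rsum_lin, rsum_deg by exact Hv. fold n. fold (zagreb p). fold Z.
    unfold Mseq. unfold nnodes. fold n.
    replace (S n - 1)%nat with n by lia.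
    assert (Hs : psi (INR (S (S n))) = psi (INR (S n)) + / INR (S n)).
    { rewrite (S_INR (S n)). apply (psi_step g); auto. apply lt_0_INR; lia. }
    unfold al, be, c. rewrite Hs. rewrite S_INR. unfold Z. field; repeat split; lra.
  - intros i Hi.
    unfold trans. destruct (Nat.leb_spec 1 i), (Nat.leb_spec i (nnodes p)); try lia. simpl andb.
    unfold Mseq. rewrite zagreb_app by (auto; lia). fold Z.
    replace (nnodes (p ++ [i])) with (S (S n))
      by (unfold nnodes, n; rewrite length_app; simpl; lia).
    replace (S (S n) - 1)%nat with (S n) by lia. fold c.
    unfold al, be. rewrite S_INR. fold n. field. lra.
Qed.
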